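(* Let $\rho:\mathbb{N}\to\mathbb{R}$ and $\beta>0$ be such that $\rho(t)=\mathcal{O}(e^{-\beta t})$, i.e. $|\rho(t)|\le c\,e^{-\beta t}$ for some $c>0$ and all $t\in\mathbb{N}$. Then for every $n\in\{1,\dots,\lfloor99\beta\rfloor\}$ there exists a constant $C(n)$ (depending on $n$, $\beta$ and $c$ but not on $m$) such that for every $m\in\mathbb{N}_+$ there is a function $\phi(t)=\sum_{k=1}^m\alpha_ke^{-\beta_kt}$ with $\beta_k>0$ for all $k\in[m]$ and $$\sum_{t=0}^\infty|\rho(t)-\phi(t)|\le\frac{C(n)}{m^n}.$$
   Context: $\mathbb{N}=\{0,1,2,\dots\}$; $[m]=\{1,\dots,m\}$. *)

(* Defs.v *)
From Stdlib Require Import Reals List.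
From Coquelicot Require Import Coquelicot.
Open Scope R_scope.

Definition expsum (m : nat) (alpha bk : nat -> R) (t : nat) : R :=
  fold_right Rplus 0 (map (fun k => alpha k * exp (- bk k * INR t)) (seq 1 m)).

(* Main.v *)
Require Import Defs.
From Stdlib Require Import Reals ZArith List Lia Lra.
From Coquelicot Require Import Coquelicot.
Open Scope R_scope.

Lemma exp_mul_INR (b : R) (t : nat) : exp (b * INR t) = exp b ^ t.
Proof.
  induction t as [|t IH].
  - simpl. rewrite Rmult_0_r. apply exp_0.
  - rewrite S_INR, Rmult_plus_distr_l, Rmult_1_r, exp_plus, IH. simpl. ring.
Qed.

Lemma exp_neg_INR (b : R) (t : nat) : exp (- b * INR t) = exp (- b) ^ t.
Proof. apply exp_mul_INR. Qed.

Lemma fold_plus_shift (l : list R) (x : R) :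
  fold_right Rplus x l = fold_right Rplus 0 l + x.
Proof. induction l; simpl; [ring| rewrite IHl; ring]. Qed.

Lemma expsum_0 alpha bk t : expsum 0 alpha bk t = 0.
Proof. reflexivity. Qed.

Lemma expsum_S m alpha bk t :
  expsum (S m) alpha bk t = expsum m alpha bk t + alpha (S m) * exp (- bk (S m) * INR t).
Proof.
  unfold expsum. rewrite seq_S, map_app, fold_right_app. simpl.
  rewrite fold_plus_shift. f_equal. replace (1 + m)%nat with (S m) by lia. ring.
Qed.

Lemma expsum_ext m alpha bk alpha' bk' t :
  (forall k, (1 <= k <= m)%nat -> alpha k = alpha' k /\ bk k = bk' k) ->
  expsum m alpha bk t = expsum m alpha' bk' t.
Proof.
  induction m as [|m IH]; intros H; [reflexivity|].
  rewrite !expsum_S. destruct (H (S m)) as [H1 H2]; [lia|].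
  rewrite IH; [rewrite H1, H2; reflexivity|]. intros k Hk; apply H; lia.
Qed.

Lemma expsum_shift m alpha bk t :
  expsum m (fun k => alpha k * exp (bk k)) bk (S t) = expsum m alpha bk t.
Proof.
  induction m as [|m IH]; [reflexivity|].
  rewrite !expsum_S, IH. f_equal. rewrite S_INR.
  rewrite Rmult_assoc, <- exp_plus. f_equal. f_equal. ring.
Qed.

Lemma geom_ex (q : R) : 0 <= q < 1 -> ex_series (fun t => q ^ t).
Proof.
  intros Hq. eexists. apply is_series_geom. rewrite Rabs_pos_eq; lra.
Qed.

Lemma ex_series_le_R (a b : nat -> R) :
  (forall n, Rabs (a n) <= b n) -> ex_series b -> ex_series a.
Proof. intros H Hb. exact (@ex_series_le R_AbsRing R_CompleteNormedModule a b H Hb). Qed.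

Lemma ex_series_Rplus (a b : nat -> R) :
  ex_series a -> ex_series b -> ex_series (fun n => a n + b n).
Proof. intros Ha Hb. exact (ex_series_plus a b Ha Hb). Qed.

Lemma expsum_summable m alpha bk :
  (forall k, (1 <= k <= m)%nat -> 0 < bk k) ->
  ex_series (fun t => Rabs (expsum m alpha bk t)).
Proof.
  induction m as [|m IH]; intros H.
  - apply ex_series_le_R with (b := fun t => 0 ^ t).
    + intros n.       rewrite expsum_0, Rabs_R0, Rabs_R0. apply pow_le; lra.
    + apply geom_ex; lra.
  - set (q := exp (- bk (S m))).
    assert (Hq : 0 <= q < 1).
    { unfold q. split; [left; apply exp_pos|]. rewrite <- exp_0. apply exp_increasing.
      assert (0 < bk (S m)) by (apply H; lia). lra. }
    apply ex_series_le_R with (b := fun t => Rabs (expsum m alpha bk t) + Rabs (alpha (S m)) * q ^ t).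
    + intros n.       rewrite Rabs_Rabsolu, expsum_S. eapply Rle_trans; [apply Rabs_triang|].
      apply Rplus_le_compat_l. rewrite Rabs_mult, exp_neg_INR. fold q.
      rewrite (Rabs_pos_eq (q ^ n)); [lra| apply pow_le; lra].
    + apply ex_series_Rplus; [apply IH; intros; apply H; lia|].
      exact (ex_series_scal_l (Rabs (alpha (S m))) _ (geom_ex q Hq)).
Qed.

Lemma diff_summable (g : nat -> R) m alpha bk :
  ex_series (fun t => Rabs (g t)) ->
  (forall k, (1 <= k <= m)%nat -> 0 < bk k) ->
  ex_series (fun t => Rabs (g t - expsum m alpha bk t)).
Proof.
  intros Hg H.
  apply ex_series_le_R with (b := fun t => Rabs (g t) + Rabs (expsum m alpha bk t)).
  - intros n.     rewrite Rabs_Rabsolu. unfold Rminus. eapply Rle_trans; [apply Rabs_triang|].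
    rewrite Rabs_Ropp. lra.
  - apply ex_series_Rplus; auto. apply expsum_summable; auto.
Qed.

Lemma key (T : nat) : forall g : nat -> R, ex_series (fun t => Rabs (g t)) ->
  forall d, 0 < d -> exists alpha bk : nat -> R,
    (forall k, (1 <= k <= T)%nat -> 0 < bk k) /\
    Series (fun t => Rabs (g t - expsum T alpha bk t)) <= Series (fun t => Rabs (g (t + T)%nat)) + d.
Proof.
  induction T as [|T IH]; intros g Hg d Hd.
  - exists (fun _ => 0), (fun _ => 1). split; [intros; lra|].
    rewrite (Series_ext _ (fun t => Rabs (g (t + 0)%nat))); [lra|].
    intros n. rewrite expsum_0, Nat.add_0_r. f_equal; ring.
  - assert (Hg' : ex_series (fun t => Rabs (g (S t)))).
    { exact (proj1 (ex_series_incr_1 (fun t => Rabs (g t))) Hg). }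
    destruct (IH (fun t => g (S t)) Hg' (d/2)) as [al [b [Hb Hs]]]; [lra|].
    set (E := fun t => expsum T (fun k => al k * exp (b k)) b t).
    set (a := g 0%nat - E 0%nat).
    set (x := d / (2 * d + 4 * Rabs a)).
    assert (Ha : 0 <= Rabs a) by apply Rabs_pos.
    assert (Hx : x * (2 * d + 4 * Rabs a) = d) by (unfold x; field; lra).
    assert (Hx0 : 0 < x) by (unfold x; apply Rdiv_lt_0_compat; lra).
    assert (Hx1 : x <= 1/2) by nra.
    set (bb := - ln x).
    assert (Hbb : exp (- bb) = x) by (unfold bb; rewrite Ropp_involutive; apply exp_ln; lra).
    assert (Hbb0 : 0 < bb).
    { unfold bb. assert (ln x < 0); [|lra]. rewrite <- ln_1. apply ln_increasing; lra. }
    set (alpha1 := fun k => if Nat.eqb k (S T) then a else al k * exp (b k)).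
    set (bk1 := fun k => if Nat.eqb k (S T) then bb else b k).
    exists alpha1, bk1.
    assert (Hpos : forall k, (1 <= k <= S T)%nat -> 0 < bk1 k).
    { intros k Hk. unfold bk1. destruct (Nat.eqb_spec k (S T)); [lra|]. apply Hb; lia. }
    split; [exact Hpos|].
    assert (Heq : forall t, expsum (S T) alpha1 bk1 t = E t + a * x ^ t).
    { intros t. rewrite expsum_S. unfold alpha1 at 2, bk1 at 2. rewrite Nat.eqb_refl.
      rewrite exp_neg_INR, Hbb. f_equal. unfold E. apply expsum_ext.
      intros k Hk. unfold alpha1, bk1. destruct (Nat.eqb_spec k (S T)); [lia|]. split; reflexivity. }
    set (f := fun t => Rabs (g t - expsum (S T) alpha1 bk1 t)).
    assert (Hf : ex_series f) by (apply diff_summable; auto).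
    change (Series f <= Series (fun t => Rabs (g (t + S T)%nat)) + d).
    rewrite (Series_incr_1 f Hf).
    assert (Hf0 : f 0%nat = 0).
    { unfold f. rewrite Heq. unfold a. simpl. rewrite <- Rabs_R0. f_equal. ring. }
    rewrite Hf0, Rplus_0_l.
    assert (Hgeo : ex_series (fun t => x ^ t)) by (apply geom_ex; lra).
    assert (Hh2 : ex_series (fun t => (Rabs a * x) * x ^ t)).
    { exact (ex_series_scal_l (Rabs a * x) _ Hgeo). }
    assert (Hh1 : ex_series (fun t => Rabs (g (S t) - expsum T al b t))).
    { apply diff_summable; auto. }
    eapply Rle_trans.
    { apply Series_le with (b := fun t => Rabs (g (S t) - expsum T al b t) + (Rabs a * x) * x ^ t).
      - intros n. split; [apply Rabs_pos|]. unfold f. rewrite Heq.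
        unfold E. rewrite expsum_shift.
        replace (g (S n) - (expsum T al b n + a * x ^ S n)) with
          ((g (S n) - expsum T al b n) + (- (a * x ^ S n))) by ring.
        eapply Rle_trans; [apply Rabs_triang|]. apply Rplus_le_compat_l.
        rewrite Rabs_Ropp, Rabs_mult, (Rabs_pos_eq (x ^ S n)); [simpl; lra| apply pow_le; lra].
      - apply ex_series_Rplus; auto. }
    rewrite Series_plus; auto. rewrite Series_scal_l.
    rewrite (is_series_unique (pow x) _ (is_series_geom x ltac:(rewrite Rabs_pos_eq; lra))).
    rewrite (Series_ext (fun t => Rabs (g (t + S T)%nat)) (fun t => Rabs (g (S (t + T))))).
    2: { intros n. do 2 f_equal. lia. }
    assert (Rabs a * x * / (1 - x) <= d / 2).
    { assert (Hinv : / (1 - x) <= 2).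
      { rewrite <- (Rinv_inv 2). apply Rinv_le_contravar; lra. }
      assert (Rabs a * x * / (1 - x) <= Rabs a * x * 2).
      { apply Rmult_le_compat_l; [nra|lra]. }
      nra. }
    cbv beta in Hs. lra.
Qed.

Lemma pow_exp_bound (beta : R) (n m : nat) : 0 < beta -> (1 <= n)%nat -> (1 <= m)%nat ->
  exp (- beta) ^ m * INR m ^ n <= (INR n / beta) ^ n.
Proof.
  intros Hb Hn Hm.
  assert (HN : 0 < INR n) by (apply lt_0_INR; lia).
  assert (HM : 0 < INR m) by (apply lt_0_INR; lia).
  set (y := beta * INR m / INR n).
  assert (Hy : 0 < y) by (unfold y; apply Rdiv_lt_0_compat; nra).
  assert (H1 : y ^ n <= exp y ^ n).
  { apply pow_incr. split; [lra|]. pose proof (exp_ineq1 y ltac:(lra)). lra. }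
  rewrite <- exp_mul_INR in H1.
  assert (H2 : y * INR n = beta * INR m) by (unfold y; field; lra).
  rewrite H2 in H1.
  assert (H3 : INR m ^ n = (INR n / beta) ^ n * y ^ n).
  { rewrite <- Rpow_mult_distr. f_equal. unfold y. field. lra. }
  rewrite <- exp_neg_INR, H3.
  assert (H4 : exp (- beta * INR m) * exp (beta * INR m) = 1).
  { rewrite <- exp_plus. replace (- beta * INR m + beta * INR m) with 0 by ring. apply exp_0. }
  assert (H5 : 0 < (INR n / beta) ^ n) by (apply pow_lt; apply Rdiv_lt_0_compat; lra).
  assert (H6 : 0 < exp (- beta * INR m)) by apply exp_pos.
  assert (exp (- beta * INR m) * y ^ n <= 1).
  { rewrite <- H4. apply Rmult_le_compat_l; lra. }
  nra.
Qed.

Theorem lemmaF3 (rho : nat -> R) (beta c : R) (hbeta : 0 < beta) (hc : 0 < c)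
  (hrho : forall t : nat, Rabs (rho t) <= c * exp (- beta * INR t)) :
  forall n : nat, (1 <= n)%nat -> (Z.of_nat n <= Int_part (99 * beta))%Z ->
  exists C : R, forall m : nat, (1 <= m)%nat ->
    exists alpha bk : nat -> R,
      (forall k : nat, (1 <= k <= m)%nat -> 0 < bk k) /\
      ex_series (fun t : nat => Rabs (rho t - expsum m alpha bk t)) /\
      Series (fun t : nat => Rabs (rho t - expsum m alpha bk t)) <= C / INR m ^ n.
Proof.
  intros n Hn _.
  set (q := exp (- beta)).
  assert (Hq : 0 < q < 1).
  { unfold q. split; [apply exp_pos|]. rewrite <- exp_0. apply exp_increasing. lra. }
  set (K := c / (1 - q) + 1).
  assert (HK : 0 < K) by (unfold K; assert (0 < c / (1 - q)) by (apply Rdiv_lt_0_compat; lra); lra).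
  exists (K * (INR n / beta) ^ n).
  intros m Hm.
  assert (Hgeo : ex_series (fun t => q ^ t)) by (apply geom_ex; lra).
  assert (Hrs : ex_series (fun t => Rabs (rho t))).
  { apply ex_series_le_R with (b := fun t => c * q ^ t).
    - intros t. rewrite Rabs_Rabsolu. unfold q. rewrite <- exp_neg_INR. apply hrho.
    - exact (ex_series_scal_l c _ Hgeo). }
  assert (Hqm : 0 < q ^ m) by (apply pow_lt; lra).
  destruct (key m rho Hrs (q ^ m) Hqm) as [al [b [Hb Hs]]].
  exists al, b. split; [exact Hb|]. split; [apply diff_summable; auto|].
  assert (Htail : Series (fun t => Rabs (rho (t + m)%nat)) <= c / (1 - q) * q ^ m).
  { eapply Rle_trans.
    { apply Series_le with (b := fun t => (c * q ^ m) * q ^ t).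
      - intros t. split; [apply Rabs_pos|]. eapply Rle_trans; [apply hrho|].
        rewrite exp_neg_INR. fold q. rewrite pow_add. lra.
      - exact (ex_series_scal_l (c * q ^ m) _ Hgeo). }
    rewrite Series_scal_l.
    rewrite (is_series_unique (pow q) _ (is_series_geom q ltac:(rewrite Rabs_pos_eq; lra))).
    right. field. lra. }
  assert (HM : 0 < INR m ^ n) by (apply pow_lt; apply lt_0_INR; lia).
  pose proof (pow_exp_bound beta n m hbeta Hn Hm) as HB. fold q in HB.
  assert (Hfin : K * q ^ m <= K * (INR n / beta) ^ n / INR m ^ n).
  { replace (K * q ^ m) with (K * (q ^ m * INR m ^ n) / INR m ^ n) by (field; lra).
    unfold Rdiv. apply Rmult_le_compat_r; [left; apply Rinv_0_lt_compat; lra|].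
    apply Rmult_le_compat_l; lra. }
  unfold K in Hfin |- *. lra.
Qed.
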